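(* As $\epsilon\to 0^+$, $u^\epsilon(r)\to u(r)$ uniformly for $0\le r\le 1$.
   Context: Let $\mathcal{B}(0,1)$ be the unit ball in $\mathbb{R}^n$ and let $V:[0,1)\to[0,\infty)$ be nonnegative and Lipschitz continuous, viewed as a radially symmetric function $V(x)=V(|x|)$ on $\mathcal{B}(0,1)$. For $\epsilon>0$, $u^\epsilon$ denotes the radially symmetric solution of $|Du^\epsilon|-V=\epsilon\Delta u^\epsilon$ in $\mathcal{B}(0,1)$, $u^\epsilon=0$ on $\partial\mathcal{B}(0,1)$, given explicitly for $|x|=r\in[0,1]$ by $u^\epsilon(r)=\int_r^1\left(\frac{1}{\epsilon}\int_0^s (t/s)^{n-1}e^{(t-s)/\epsilon}V(t)\,dt\right)ds$. Also $u(r)=\int_r^1 V(s)\,ds$ for $|x|=r\in[0,1]$, which is the maximal radially symmetric viscosity solution of $|Du|=V$ in $\mathcal{B}(0,1)$, $u=0$ on $\partial\mathcal{B}(0,1)$. *)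

(* Defs.v *)
From Stdlib Require Import Reals Lra.
From Coquelicot Require Import Coquelicot.
Open Scope R_scope.

(* Radial profile of the viscous solution u^eps in dimension n:
   u^eps(r) = int_r^1 ( (1/eps) int_0^s (t/s)^(n-1) e^((t-s)/eps) V(t) dt ) ds *)
Definition u_eps (n : nat) (V : R -> R) (eps r : R) : R :=
  RInt (fun s => / eps *
          RInt (fun t => (t / s) ^ (n - 1) * exp ((t - s) / eps) * V t) 0 s)
       r 1.

(* Radial profile of the maximal viscosity solution: u(r) = int_r^1 V(s) ds *)
Definition u_lim (V : R -> R) (r : R) : R := RInt V r 1.

(* Main.v *)
Require Import Defs.
From Stdlib Require Import Reals Lra.
From Coquelicot Require Import Coquelicot.
Open Scope R_scope.


Lemma abs_diff_le a b c : 0 <= a <= c -> 0 <= b <= c -> Rabs (a - b) <= c.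
Proof. intros. unfold Rabs; destruct Rcase_abs; lra. Qed.

Lemma ext_lemma (V : R -> R) (L : R) : 0 <= L ->
  (forall x y, 0 <= x < 1 -> 0 <= y < 1 -> Rabs (V x - V y) <= L * Rabs (x - y)) ->
  exists W : R -> R,
    (forall x y, Rabs (W x - W y) <= L * Rabs (x - y)) /\
    (forall x, Rabs (W x) <= Rabs (V 0) + L) /\
    (forall x, 0 <= x < 1 -> W x = V x).
Proof.
  intros HL HV.
  set (u := fun k : nat => V (1 - / (INR k + 2))).
  assert (Hk : forall k : nat, 0 < / (INR k + 2) <= / 2).
  { intro k. pose proof (pos_INR k). split. apply Rinv_0_lt_compat; lra.
    apply Rinv_le_contravar; lra. }
  assert (Hk' : forall k N : nat, (N <= k)%nat -> / (INR k + 2) <= / (INR N + 2)).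
  { intros k N HN. apply le_INR in HN. pose proof (pos_INR N).
    apply Rinv_le_contravar; lra. }
  assert (Hsmall : forall d, 0 < d -> exists N : nat, L * / (INR N + 2) < d).
  { intros d Hd. destruct (INR_archimed d L Hd) as [N HN]. exists N.
    pose proof (pos_INR N).
    apply (Rmult_lt_reg_r (INR N + 2)). lra.
    rewrite Rmult_assoc, Rinv_l by lra. nra. }
  assert (Hc : ex_finite_lim_seq u).
  { apply ex_lim_seq_cauchy_corr. intros e.
    destruct (Hsmall e (cond_pos e)) as [N HN]. exists N. intros p q Hp Hq.
    unfold u. eapply Rle_lt_trans. apply HV.
    - pose proof (Hk p); split; lra.
    - pose proof (Hk q); split; lra.
    - eapply Rle_lt_trans; [|exact HN]. apply Rmult_le_compat_l; auto.
      replace (1 - / (INR p + 2) - (1 - / (INR q + 2))) with (/ (INR q + 2) - / (INR p + 2)) by ring.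
      apply abs_diff_le.
      + pose proof (Hk q); pose proof (Hk' q N Hq); lra.
      + pose proof (Hk p); pose proof (Hk' p N Hp); lra. }
  set (l := real (Lim_seq u)).
  assert (Hl : is_lim_seq u l).
  { destruct Hc as [l0 Hl0]. unfold l. rewrite (is_lim_seq_unique _ _ Hl0). exact Hl0. }
  assert (Hlr : forall x, 0 <= x < 1 -> Rabs (V x - l) <= L * (1 - x)).
  { intros x Hx.
    destruct (Rle_lt_dec (Rabs (V x - l)) (L * (1 - x))) as [H|H]; auto.
    exfalso. set (d := Rabs (V x - l) - L * (1 - x)).
    assert (Hd : 0 < d / 2) by (unfold d; lra).
    apply is_lim_seq_spec in Hl. destruct (Hl (mkposreal _ Hd)) as [N1 HN1].
    destruct (Hsmall (d/2) Hd) as [N2 HN2].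
    set (k := Nat.max N1 N2).
    specialize (HN1 k (Nat.le_max_l _ _)). simpl in HN1.
    assert (H2 : L * / (INR k + 2) < d / 2).
    { eapply Rle_lt_trans; [|exact HN2]. apply Rmult_le_compat_l; auto.
      apply Hk'. apply Nat.le_max_r. }
    assert (H3 : Rabs (V x - u k) <= L * ((1 - x) + / (INR k + 2))).
    { unfold u. eapply Rle_trans. apply HV; auto. pose proof (Hk k); split; lra.
      apply Rmult_le_compat_l; auto. pose proof (Hk k).
      unfold Rabs; destruct Rcase_abs; lra. }
    assert (H4 : Rabs (V x - l) <= Rabs (V x - u k) + Rabs (u k - l)).
    { replace (V x - l) with ((V x - u k) + (u k - l)) by ring. apply Rabs_triang. }
    unfold d in *. lra. }
  set (W' := fun y => if Rlt_dec y 1 then V y else l).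
  set (c := fun x => Rmax 0 (Rmin x 1)).
  assert (Hc1 : forall x, 0 <= c x <= 1).
  { intro x. unfold c, Rmax, Rmin. repeat destruct Rle_dec; lra. }
  assert (Hc2 : forall x y, Rabs (c x - c y) <= Rabs (x - y)).
  { intros x y. unfold c, Rmax, Rmin. repeat destruct Rle_dec; unfold Rabs; repeat destruct Rcase_abs; lra. }
  assert (HW' : forall x y, 0 <= x <= 1 -> 0 <= y <= 1 -> Rabs (W' x - W' y) <= L * Rabs (x - y)).
  { intros x y Hx Hy. unfold W'. destruct (Rlt_dec x 1); destruct (Rlt_dec y 1).
    - apply HV; lra.
    - replace y with 1 by lra. eapply Rle_trans. apply Hlr; lra.
      apply Rmult_le_compat_l; auto. unfold Rabs; destruct Rcase_abs; lra.
    - replace x with 1 by lra. rewrite Rabs_minus_sym. eapply Rle_trans. apply Hlr; lra.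
      apply Rmult_le_compat_l; auto. unfold Rabs; destruct Rcase_abs; lra.
    - replace (l - l) with 0 by ring. rewrite Rabs_R0. apply Rmult_le_pos; auto. apply Rabs_pos. }
  exists (fun x => W' (c x)). split; [|split].
  - intros x y. eapply Rle_trans. apply HW'; auto. apply Rmult_le_compat_l; auto.
  - intro x. assert (E0 : W' 0 = V 0).
    { unfold W'. destruct Rlt_dec; lra. }
    assert (H := HW' (c x) 0 (Hc1 x) ltac:(lra)). rewrite E0 in H.
    replace (c x - 0) with (c x) in H by ring. rewrite (Rabs_pos_eq (c x)) in H by apply Hc1.
    assert (H' : Rabs (W' (c x)) <= Rabs (W' (c x) - V 0) + Rabs (V 0)).
    { replace (W' (c x)) with ((W' (c x) - V 0) + V 0) at 1 by ring. apply Rabs_triang. }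
    pose proof (Hc1 x). nra.
  - intros x Hx. assert (c x = x). { unfold c, Rmax, Rmin. repeat destruct Rle_dec; lra. }
    rewrite H. unfold W'. destruct Rlt_dec; lra.
Qed.


Lemma cont_mult (f g : R -> R) x : continuous f x -> continuous g x -> continuous (fun y => f y * g y) x.
Proof. intros. apply (continuous_mult f g); auto. Qed.
Lemma cont_minus (f g : R -> R) x : continuous f x -> continuous g x -> continuous (fun y => f y - g y) x.
Proof. intros. apply (continuous_minus f g); auto. Qed.
Lemma cont_const (c x : R) : continuous (fun _ => c) x.
Proof. apply continuous_const. Qed.

Lemma exp_le_mono a b : a <= b -> exp a <= exp b.
Proof. intros [H|H]. left; apply exp_increasing; auto. subst; lra. Qed.

Lemma pow_le_one x k : 0 <= x <= 1 -> x ^ k <= 1.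
Proof. intros. rewrite <- (pow1 k). apply pow_incr. lra. Qed.

Lemma bernoulli x k : 0 <= x -> 1 + INR k * (x - 1) <= x ^ k.
Proof.
  intros Hx. induction k as [|k IH]. simpl; lra.
  rewrite S_INR. simpl. pose proof (pos_INR k).
  assert (x * (1 + INR k * (x - 1)) <= x * x ^ k) by (apply Rmult_le_compat_l; auto).
  assert (0 <= INR k * ((x - 1) * (x - 1))) by (apply Rmult_le_pos; [auto|apply Rle_0_sqr]).
  nra.
Qed.

Lemma cont_of_derive (f : R -> R) x : ex_derive f x -> continuous f x.
Proof. intros H. exact (@ex_derive_continuous R_AbsRing R_NormedModule f x H). Qed.

Lemma exR_cont (f : R -> R) a b : (forall z, Rmin a b <= z <= Rmax a b -> continuous f z) -> ex_RInt f a b.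
Proof. intros H. exact (@ex_RInt_continuous R_CompleteNormedModule f a b H). Qed.
Lemma RInt_scalR (f : R -> R) a b k : ex_RInt f a b -> RInt (fun x => k * f x) a b = k * RInt f a b.
Proof. intros H. exact (@RInt_scal R_CompleteNormedModule f a b k H). Qed.
Lemma RInt_minusR (f g : R -> R) a b : ex_RInt f a b -> ex_RInt g a b -> RInt (fun x => f x - g x) a b = RInt f a b - RInt g a b.
Proof. intros H1 H2. exact (@RInt_minus R_CompleteNormedModule f g a b H1 H2). Qed.
Lemma RInt_plusR (f g : R -> R) a b : ex_RInt f a b -> ex_RInt g a b -> RInt (fun x => f x + g x) a b = RInt f a b + RInt g a b.
Proof. intros H1 H2. exact (@RInt_plus R_CompleteNormedModule f g a b H1 H2). Qed.
Lemma RInt_ChaslesR (f : R -> R) a b c : ex_RInt f a b -> ex_RInt f b c -> RInt f a b + RInt f b c = RInt f a c.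
Proof. intros H1 H2. exact (@RInt_Chasles R_CompleteNormedModule f a b c H1 H2). Qed.
Lemma RInt_extR (f g : R -> R) a b : (forall x, Rmin a b < x < Rmax a b -> f x = g x) -> RInt f a b = RInt g a b.
Proof. intros H. exact (@RInt_ext R_CompleteNormedModule f g a b H). Qed.

Lemma RInt_correctR (f : R -> R) a b : ex_RInt f a b -> is_RInt f a b (RInt f a b).
Proof. intros H. exact (@RInt_correct R_CompleteNormedModule f a b H). Qed.

Lemma is_RInt_deriveR (f df : R -> R) a b :
  (forall x, Rmin a b <= x <= Rmax a b -> is_derive f x (df x)) ->
  (forall x, Rmin a b <= x <= Rmax a b -> continuous df x) -> is_RInt df a b (f b - f a).
Proof. intros H1 H2. exact (@is_RInt_derive R_CompleteNormedModule f df a b H1 H2). Qed.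
Lemma is_RInt_uniqueR (f : R -> R) a b l : is_RInt f a b l -> RInt f a b = l.
Proof. intros H. exact (@is_RInt_unique R_CompleteNormedModule f a b l H). Qed.

Section CoreS.
Variables (m : nat) (W : R -> R) (L M eps : R).
Hypotheses (HL : 0 <= L) (HM : 0 <= M) (Heps : 0 < eps)
  (HWL : forall x y, Rabs (W x - W y) <= L * Rabs (x - y))
  (HWM : forall x, Rabs (W x) <= M).

Lemma W_cont x : continuous W x.
Proof.
  apply continuity_pt_filterlim. intros e He. exists (e / (L + 1)). split.
  apply Rdiv_lt_0_compat; lra.
  intros y [_ Hy]. simpl in *. unfold R_dist in *.
  eapply Rle_lt_trans. apply HWL.
  apply Rle_lt_trans with (L * (e / (L + 1))).
  apply Rmult_le_compat_l; lra.
  assert (E : e / (L + 1) * (L + 1) = e) by (field; lra).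
  assert (0 < e / (L + 1)) by (apply Rdiv_lt_0_compat; lra). nra.
Qed.

Definition kW s t := (t / s) ^ m * exp ((t - s) / eps) * W t.
Definition hh t := t ^ m * exp (t / eps) * W t.
Definition FF s := RInt hh 0 s.
Definition w s := / eps * RInt (kW s) 0 s.

Lemma kW_cont s t : continuous (kW s) t.
Proof.
  unfold kW. apply cont_mult; [|apply W_cont].
  apply cont_of_derive. auto_derive. auto.
Qed.

Lemma hh_cont t : continuous hh t.
Proof.
  unfold hh. apply cont_mult; [|apply W_cont].
  apply cont_of_derive. auto_derive. auto.
Qed.

Lemma ex_kW s a b : ex_RInt (kW s) a b.
Proof. apply exR_cont. intros; apply kW_cont. Qed.
Lemma ex_hh a b : ex_RInt hh a b.
Proof. apply exR_cont. intros; apply hh_cont. Qed.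

Lemma w_eq s : w s = / eps * ((/ s) ^ m * exp (- s / eps) * FF s).
Proof.
  unfold w, FF. f_equal.
  rewrite (RInt_extR (kW s) (fun t => ((/ s) ^ m * exp (- s / eps)) * (hh t))).
  rewrite RInt_scalR. reflexivity. apply ex_hh.
  intros t _. unfold kW, hh.
  unfold Rdiv. rewrite Rpow_mult_distr.
  replace ((t - s) * / eps) with (t * / eps + - s * / eps) by ring.
  rewrite exp_plus. ring.
Qed.

Lemma FF_cont s : continuous FF s.
Proof.
  apply (continuous_RInt_1 hh 0 s FF).
  apply filter_forall. intros z. unfold FF. apply RInt_correctR. apply ex_hh.
Qed.

Lemma w_cont s : s <> 0 -> continuous w s.
Proof.
  intros Hs.
  apply continuous_ext_loc with (g := fun s => / eps * ((/ s) ^ m * exp (- s / eps) * FF s)).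
  apply filter_forall. intros; symmetry; apply w_eq.
  apply cont_mult. apply cont_const.
  apply cont_mult; [|apply FF_cont].
  apply cont_of_derive. auto_derive. auto.
Qed.

Lemma w0 : w 0 = 0.
Proof. unfold w. rewrite RInt_point. change (zero : R) with 0. ring. Qed.

Lemma kW_le s t : 0 < s -> 0 <= t <= s -> Rabs (kW s t) <= exp ((t - s) / eps) * Rabs (W t).
Proof.
  intros Hs Ht. unfold kW. rewrite !Rabs_mult.
  rewrite (Rabs_pos_eq (exp _)) by (left; apply exp_pos).
  assert (0 <= t / s <= 1).
  { unfold Rdiv. pose proof (Rinv_0_lt_compat s Hs). split. nra.
    assert (E : s * / s = 1) by (field; lra). nra. }
  rewrite Rabs_pos_eq by (apply pow_le; lra).
  pose proof (pow_le_one (t/s) m H). pose proof (exp_pos ((t - s) / eps)).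
  apply Rmult_le_compat_r. apply Rabs_pos. nra.
Qed.

Lemma w_small s : 0 < s -> Rabs (w s) <= M * s / eps.
Proof.
  intros Hs. unfold w. rewrite Rabs_mult, Rabs_inv, (Rabs_pos_eq eps) by lra.
  assert (Rabs (RInt (kW s) 0 s) <= (s - 0) * M).
  { apply abs_RInt_le_const. lra. apply ex_kW. intros t Ht.
    eapply Rle_trans. apply kW_le; lra.
    assert (exp ((t - s) / eps) <= 1).
    { rewrite <- exp_0. apply exp_le_mono. apply Rmult_le_0_r. lra.
      left; apply Rinv_0_lt_compat; lra. }
    pose proof (HWM t). pose proof (Rabs_pos (W t)). pose proof (exp_pos ((t - s) / eps)). nra. }
  pose proof (Rinv_0_lt_compat eps Heps).
  replace (M * s / eps) with (/ eps * ((s - 0) * M)) by (field; lra).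
  apply Rmult_le_compat_l; lra.
Qed.

Definition g s := w (Rabs s).

Lemma g_cont s : continuous g s.
Proof.
  destruct (Req_dec s 0) as [->|Hs].
  - apply continuity_pt_filterlim. intros e He.
    exists (e * eps / (M + 1)). split. apply Rdiv_lt_0_compat. nra. lra.
    intros y [_ Hy]. simpl in *. unfold R_dist in *.
    unfold g. rewrite Rabs_R0, w0. rewrite Rminus_0_r in *. try rewrite Rminus_0_r.
    destruct (Req_dec y 0) as [->|Hy0]. rewrite Rabs_R0, w0, Rabs_R0. auto.
    assert (Hp : 0 < Rabs y) by (apply Rabs_pos_lt; auto).
    eapply Rle_lt_trans. apply w_small; auto.
    assert (Rabs y * (M + 1) < e * eps).
    { apply (Rmult_lt_reg_r (/ (M + 1))). apply Rinv_0_lt_compat; lra.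
      rewrite Rmult_assoc, Rinv_r by lra. lra. }
    apply (Rmult_lt_reg_r eps). lra. unfold Rdiv. rewrite Rmult_assoc, Rinv_l by lra. nra.
  - unfold g. apply (continuous_comp Rabs w). exact (@continuous_abs R_AbsRing s).
    apply w_cont. apply Rabs_no_R0; auto.
Qed.


Lemma I1_eq s : RInt (fun t => exp ((t - s) / eps)) 0 s = eps * (1 - exp (- s / eps)).
Proof.
  assert (H : is_RInt (fun t => exp ((t - s) / eps)) 0 s
     ((fun t => eps * exp ((t - s) / eps)) s - (fun t => eps * exp ((t - s) / eps)) 0)).
  { apply (is_RInt_deriveR (fun t => eps * exp ((t - s) / eps))).
    + intros. auto_derive. auto. unfold Rdiv, Rminus. field. lra.
    + intros. apply cont_of_derive. auto_derive. auto. }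
  apply is_RInt_uniqueR in H. rewrite H. simpl.
  replace ((s - s) / eps) with 0 by (field; lra). rewrite exp_0.
  replace ((0 - s) / eps) with (- s / eps) by (field; lra). ring.
Qed.

Lemma J_eq s : RInt (fun t => (s - t) * exp ((t - s) / eps)) 0 s
   = eps ^ 2 - (eps * s + eps ^ 2) * exp (- s / eps).
Proof.
  assert (H : is_RInt (fun t => (s - t) * exp ((t - s) / eps)) 0 s
     ((fun t => (eps * (s - t) + eps ^ 2) * exp ((t - s) / eps)) s
       - (fun t => (eps * (s - t) + eps ^ 2) * exp ((t - s) / eps)) 0)).
  { apply (is_RInt_deriveR (fun t => (eps * (s - t) + eps ^ 2) * exp ((t - s) / eps))).
    + intros. auto_derive. auto. unfold Rdiv, Rminus. field. lra.
    + intros. apply cont_of_derive. auto_derive. auto. }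
  apply is_RInt_uniqueR in H. rewrite H. simpl.
  replace ((s - s) / eps) with 0 by (field; lra). rewrite exp_0.
  replace ((0 - s) / eps) with (- s / eps) by (field; lra). ring.
Qed.

Lemma ex_e s a b : ex_RInt (fun t => exp ((t - s) / eps)) a b.
Proof. apply exR_cont. intros. apply cont_of_derive. auto_derive. auto. Qed.
Lemma ex_se s a b : ex_RInt (fun t => (s - t) * exp ((t - s) / eps)) a b.
Proof. apply exR_cont. intros. apply cont_of_derive. auto_derive. auto. Qed.

Lemma K_le s t : 0 < s -> 0 <= t <= s ->
  0 <= (t / s) ^ m * exp ((t - s) / eps) <= exp ((t - s) / eps).
Proof.
  intros Hs Ht.
  assert (0 <= t / s <= 1).
  { unfold Rdiv. pose proof (Rinv_0_lt_compat s Hs). split. nra.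
    assert (E : s * / s = 1) by (field; lra). nra. }
  pose proof (pow_le_one (t/s) m H). pose proof (pow_le (t/s) m (proj1 H)).
  pose proof (exp_pos ((t - s) / eps)). split; nra.
Qed.

Lemma w_bound s : 0 < s -> Rabs (w s) <= M.
Proof.
  intros Hs.
  assert (A := abs_RInt_le (kW s) 0 s ltac:(lra) (ex_kW s 0 s)).
  assert (B : RInt (fun t => Rabs (kW s t)) 0 s <= RInt (fun t => M * exp ((t - s) / eps)) 0 s).
  { apply RInt_le. lra.
    - apply exR_cont. intros. apply (continuous_comp (kW s) Rabs). apply kW_cont.
      exact (@continuous_abs R_AbsRing _).
    - apply exR_cont. intros. apply cont_of_derive. auto_derive. auto.
    - intros t Ht. eapply Rle_trans. apply kW_le; lra.
      pose proof (exp_pos ((t - s) / eps)). pose proof (HWM t). nra. }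
  rewrite RInt_scalR in B by apply ex_e. rewrite I1_eq in B.
  unfold w. rewrite Rabs_mult, Rabs_inv, (Rabs_pos_eq eps) by lra.
  pose proof (exp_pos (- s / eps)). pose proof (Rinv_0_lt_compat eps Heps).
  assert (E : / eps * (M * (eps * (1 - exp (- s / eps)))) = M * (1 - exp (- s / eps))) by (field; lra).
  assert (/ eps * Rabs (RInt (kW s) 0 s) <= / eps * (M * (eps * (1 - exp (- s / eps))))).
  { apply Rmult_le_compat_l; lra. }
  nra.
Qed.

Lemma w_est s : 0 < s -> Rabs (w s - W s) <= eps * L + M * (exp (- s / eps) + INR m * eps / s).
Proof.
  intros Hs.
  set (K := fun t => (t / s) ^ m * exp ((t - s) / eps)).
  assert (exK : ex_RInt K 0 s).
  { apply exR_cont. intros. apply cont_of_derive. unfold K. auto_derive. auto. }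
  assert (exA : ex_RInt (fun t => K t * (W t - W s)) 0 s).
  { apply exR_cont. intros. apply cont_mult.
    apply cont_of_derive. unfold K. auto_derive. auto.
    apply cont_minus. apply W_cont. apply cont_const. }
  assert (exB : ex_RInt (fun t => W s * K t) 0 s).
  { apply exR_cont. intros. apply cont_mult. apply cont_const.
    apply cont_of_derive. unfold K. auto_derive. auto. }
  assert (Hsplit : RInt (kW s) 0 s = RInt (fun t => K t * (W t - W s)) 0 s + W s * RInt K 0 s).
  { rewrite <- RInt_scalR by exact exK. rewrite <- RInt_plusR by assumption.
    apply RInt_extR. intros; unfold kW, K; ring. }
  assert (HA : Rabs (RInt (fun t => K t * (W t - W s)) 0 s) <= L * eps ^ 2).
  { eapply Rle_trans. apply abs_RInt_le. lra. exact exA.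
    eapply Rle_trans. apply RInt_le with (g := fun t => L * ((s - t) * exp ((t - s) / eps))).
    lra.
    - apply exR_cont. intros. apply (continuous_comp (fun t => K t * (W t - W s)) Rabs).
      apply cont_mult.
      apply cont_of_derive. unfold K. auto_derive. auto.
      apply cont_minus. apply W_cont. apply cont_const.
      exact (@continuous_abs R_AbsRing _).
    - apply exR_cont. intros. apply cont_of_derive. auto_derive. auto.
    - intros t Ht. rewrite Rabs_mult. destruct (K_le s t Hs ltac:(lra)) as [K0 K1].
      fold (K t) in K0, K1. rewrite (Rabs_pos_eq (K t)) by lra.
      assert (H1 : Rabs (W t - W s) <= L * (s - t)).
      { eapply Rle_trans. apply HWL. rewrite Rabs_minus_sym, Rabs_pos_eq by lra. lra. }
      pose proof (Rabs_pos (W t - W s)).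
      apply Rle_trans with (exp ((t - s) / eps) * Rabs (W t - W s)).
      apply Rmult_le_compat_r; lra.
      pose proof (exp_pos ((t - s) / eps)). nra.
    - rewrite RInt_scalR by apply ex_se. rewrite J_eq.
      pose proof (exp_pos (- s / eps)).
      assert (0 <= (eps * s + eps ^ 2) * exp (- s / eps)).
      { apply Rmult_le_pos; [|lra]. nra. }
      nra. }
  assert (HB1 : RInt K 0 s <= eps * (1 - exp (- s / eps))).
  { rewrite <- I1_eq. apply RInt_le. lra. exact exK. apply ex_e.
    intros t Ht. apply (K_le s t Hs). lra. }
  assert (HB2 : eps * (1 - exp (- s / eps)) - INR m / s * (eps ^ 2 - (eps * s + eps ^ 2) * exp (- s / eps))
                <= RInt K 0 s).
  { assert (Eq : RInt (fun t => exp ((t - s) / eps) - INR m / s * ((s - t) * exp ((t - s) / eps))) 0 s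
       = eps * (1 - exp (- s / eps)) - INR m / s * (eps ^ 2 - (eps * s + eps ^ 2) * exp (- s / eps))).
    { rewrite RInt_minusR. rewrite RInt_scalR. rewrite I1_eq, J_eq. reflexivity.
      apply ex_se. apply ex_e.
      apply exR_cont; intros; apply cont_of_derive; auto_derive; auto. }
    rewrite <- Eq.
    apply RInt_le. lra.
    apply exR_cont; intros; apply cont_of_derive; auto_derive; auto. exact exK.
    intros t Ht. unfold K.
    assert (Hx : 0 <= t / s) by (unfold Rdiv; pose proof (Rinv_0_lt_compat s Hs); nra).
    pose proof (bernoulli (t / s) m Hx).
    assert (E : INR m / s * ((s - t) * exp ((t - s) / eps)) = - (INR m * (t / s - 1)) * exp ((t - s) / eps))
      by (field; lra).
    rewrite E. pose proof (exp_pos ((t - s) / eps)). nra. }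
  set (B := RInt K 0 s) in *.
  set (A := RInt (fun t => K t * (W t - W s)) 0 s) in *.
  set (ex := exp (- s / eps)) in *.
  assert (Hex : 0 < ex) by apply exp_pos.
  assert (X1 : / eps * B <= 1 - ex).
  { replace (1 - ex) with (/ eps * (eps * (1 - ex))) by (field; lra).
    apply Rmult_le_compat_l. left; apply Rinv_0_lt_compat; lra. exact HB1. }
  assert (X2 : 1 - ex - INR m * eps / s <= / eps * B).
  { apply Rle_trans with (/ eps * (eps * (1 - ex) - INR m / s * (eps ^ 2 - (eps * s + eps ^ 2) * ex))).
    - replace (/ eps * (eps * (1 - ex) - INR m / s * (eps ^ 2 - (eps * s + eps ^ 2) * ex)))
        with (1 - ex - INR m * eps / s + INR m / s * ((s + eps) * ex)) by (field; lra).
      assert (0 <= INR m / s * ((s + eps) * ex)).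
      { apply Rmult_le_pos. unfold Rdiv. apply Rmult_le_pos. apply pos_INR.
        left; apply Rinv_0_lt_compat; lra. nra. }
      lra.
    - apply Rmult_le_compat_l. left; apply Rinv_0_lt_compat; lra. exact HB2. }
  unfold w. rewrite Hsplit.
  replace (/ eps * (A + W s * B) - W s) with (/ eps * A + W s * (/ eps * B - 1)) by ring.
  eapply Rle_trans. apply Rabs_triang.
  rewrite !Rabs_mult, Rabs_inv, (Rabs_pos_eq eps) by lra.
  assert (Y1 : / eps * Rabs A <= eps * L).
  { replace (eps * L) with (/ eps * (L * eps ^ 2)) by (field; lra).
    apply Rmult_le_compat_l. left; apply Rinv_0_lt_compat; lra. exact HA. }
  assert (Y2 : Rabs (/ eps * B - 1) <= ex + INR m * eps / s).
  { unfold Rabs; destruct Rcase_abs; lra. }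
  pose proof (HWM s). pose proof (Rabs_pos (W s)). pose proof (Rabs_pos (/ eps * B - 1)).
  assert (Rabs (W s) * Rabs (/ eps * B - 1) <= M * (ex + INR m * eps / s)).
  { apply Rmult_le_compat; auto. }
  lra.
Qed.

Definition g_ex a b : ex_RInt g a b.
Proof. apply exR_cont. intros. apply g_cont. Qed.
Definition W_ex a b : ex_RInt W a b.
Proof. apply exR_cont. intros. apply W_cont. Qed.

Lemma diff_bound a r : 0 < a <= 1 -> 0 <= r <= 1 ->
  Rabs (RInt g r 1 - RInt W r 1) <= 2 * M * a + (eps * L + M * (exp (- a / eps) + INR m * eps / a)).
Proof.
  intros Ha Hr.
  set (E := eps * L + M * (exp (- a / eps) + INR m * eps / a)).
  assert (HE : 0 <= E).
  { unfold E. pose proof (exp_pos (- a / eps)). pose proof (pos_INR m).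
    assert (0 <= INR m * eps / a).
    { unfold Rdiv. apply Rmult_le_pos. nra. left; apply Rinv_0_lt_compat; lra. }
    nra. }
  assert (exh : forall a b, ex_RInt (fun s => g s - W s) a b).
  { intros. apply exR_cont. intros. apply cont_minus. apply g_cont. apply W_cont. }
  assert (Hfar : forall s, a <= s <= 1 -> Rabs (g s - W s) <= E).
  { intros s Hs. unfold g. rewrite (Rabs_pos_eq s) by lra.
    eapply Rle_trans. apply w_est. lra. unfold E.
    apply Rplus_le_compat_l. apply Rmult_le_compat_l. auto.
    apply Rplus_le_compat. apply exp_le_mono.
    unfold Rdiv. apply Rmult_le_compat_r. left; apply Rinv_0_lt_compat; lra. lra.
    unfold Rdiv. apply Rmult_le_compat_l. pose proof (pos_INR m); nra.
    apply Rinv_le_contravar; lra. }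
  assert (Hnear : forall s, 0 <= s <= 1 -> Rabs (g s - W s) <= 2 * M).
  { intros s Hs. unfold g. rewrite (Rabs_pos_eq s) by lra.
    eapply Rle_trans. unfold Rminus. apply Rabs_triang. rewrite Rabs_Ropp.
    pose proof (HWM s). destruct (Req_dec s 0) as [->|H0].
    rewrite w0, Rabs_R0. lra. pose proof (w_bound s ltac:(lra)). lra. }
  rewrite <- RInt_minusR by (apply g_ex || apply W_ex).
  destruct (Rle_lt_dec a r) as [Har|Har].
  - eapply Rle_trans. apply abs_RInt_le_const. lra. apply exh.
    intros t Ht. apply Hfar. lra.
    assert ((1 - r) * E <= E) by nra. nra.
  - rewrite <- (RInt_ChaslesR _ r a 1) by apply exh.
    eapply Rle_trans. apply Rabs_triang.
    apply Rplus_le_compat.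
    + eapply Rle_trans. apply abs_RInt_le_const. lra. apply exh.
      intros t Ht. apply Hnear. lra. nra.
    + eapply Rle_trans. apply abs_RInt_le_const. lra. apply exh.
      intros t Ht. apply Hfar. lra. nra.
Qed.

End CoreS.

Theorem theorem3p1 (n : nat) (V : R -> R) :
  (1 <= n)%nat ->
  (forall x, 0 <= x < 1 -> 0 <= V x) ->
  (exists L : R, forall x y, 0 <= x < 1 -> 0 <= y < 1 ->
      Rabs (V x - V y) <= L * Rabs (x - y)) ->
  forall eta : R, 0 < eta ->
  exists delta : R, 0 < delta /\
    forall eps : R, 0 < eps < delta ->
    forall r : R, 0 <= r <= 1 ->
      Rabs (u_eps n V eps r - u_lim V r) < eta.
Proof.
  intros Hn Hpos [L0 HL0] eta Heta.
  set (L := Rmax L0 0).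
  assert (HL : 0 <= L) by (unfold L; apply Rmax_r).
  assert (HV : forall x y, 0 <= x < 1 -> 0 <= y < 1 -> Rabs (V x - V y) <= L * Rabs (x - y)).
  { intros x y Hx Hy. eapply Rle_trans. apply HL0; auto.
    apply Rmult_le_compat_r. apply Rabs_pos. apply Rmax_l. }
  destruct (ext_lemma V L HL HV) as [W [HWL [HWM HWV]]].
  set (M := Rabs (V 0) + L).
  assert (HM : 0 <= M) by (unfold M; pose proof (Rabs_pos (V 0)); lra).
  set (m := (n - 1)%nat).
  set (a := Rmin 1 (eta / (8 * (M + 1)))).
  assert (Ha0 : 0 < eta / (8 * (M + 1))) by (apply Rdiv_lt_0_compat; lra).
  assert (Ha : 0 < a <= 1).
  { unfold a, Rmin. destruct Rle_dec; lra. }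
  assert (Ha2 : a <= eta / (8 * (M + 1))) by (unfold a; apply Rmin_r).
  pose proof (pos_INR m) as Hm.
  set (C := L + M * (INR m + 1) / a + 1).
  assert (HMa : 0 <= M * (INR m + 1) / a).
  { unfold Rdiv. apply Rmult_le_pos. nra. left; apply Rinv_0_lt_compat; lra. }
  assert (HC : 0 < C) by (unfold C; lra).
  exists (eta / (2 * C)). split.
  { apply Rdiv_lt_0_compat; lra. }
  intros eps [He Hd] r Hr.
  assert (E1 : u_eps n V eps r = RInt (g m W eps) r 1).
  { unfold u_eps, g, w. apply RInt_extR. intros s Hs.
    rewrite Rmin_left, Rmax_right in Hs by lra.
    rewrite (Rabs_pos_eq s) by lra. f_equal. apply RInt_extR. intros t Ht.
    rewrite Rmin_left, Rmax_right in Ht by lra. unfold kW. rewrite HWV by lra. reflexivity. }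
  assert (E2 : u_lim V r = RInt W r 1).
  { unfold u_lim. apply RInt_extR. intros s Hs.
    rewrite Rmin_left, Rmax_right in Hs by lra. symmetry. apply HWV. lra. }
  rewrite E1, E2.
  eapply Rle_lt_trans. apply (diff_bound m W L M eps HL HM He HWL HWM a r Ha Hr).
  assert (T1 : 2 * M * a <= eta / 4).
  { apply Rle_trans with (2 * M * (eta / (8 * (M + 1)))).
    apply Rmult_le_compat_l; lra.
    replace (2 * M * (eta / (8 * (M + 1)))) with (eta / 4 * (M / (M + 1))) by (field; lra).
    assert (M / (M + 1) <= 1).
    { unfold Rdiv. assert (E : (M + 1) * / (M + 1) = 1) by (field; lra).
      pose proof (Rinv_0_lt_compat (M + 1) ltac:(lra)). nra. }
    nra. }
  assert (T2 : exp (- a / eps) <= eps / a).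
  { assert (Hp : 0 < a / eps) by (apply Rdiv_lt_0_compat; lra).
    pose proof (exp_ineq1 (a / eps) ltac:(lra)).
    replace (- a / eps) with (- (a / eps)) by (field; lra). rewrite exp_Ropp.
    replace (eps / a) with (/ (a / eps)) by (field; lra).
    apply Rinv_le_contravar; lra. }
  assert (T3 : eps * L + M * (exp (- a / eps) + INR m * eps / a) <= eps * C - eps).
  { apply Rle_trans with (eps * L + M * (eps / a + INR m * eps / a)).
    apply Rplus_le_compat_l. apply Rmult_le_compat_l; lra.
    unfold C. replace (eps * L + M * (eps / a + INR m * eps / a)) with (eps * (L + M * (INR m + 1) / a))
      by (field; lra). nra. }
  assert (T4 : eps * C < eta / 2).
  { replace (eta / 2) with (eta / (2 * C) * C) by (field; lra). nra. }
  lra.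
Qed.
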